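(* Let $\Omega$ be finite. Fix $p:\Omega\to(0,1]$ with $\sum_\omega p(\omega)=1$ and $\alpha\in\mathbb R$, and let $K=\{y\in[-\infty,\infty)^\Omega:\langle p,y\rangle\le\alpha\}$. Fix $\varepsilon>0$ and $x\in\mathbb R^\Omega$ with $\langle p,x\rangle=\alpha$. Then there is $\delta\in(0,\varepsilon)$ such that no point of $K\cap B(x,\delta)$ is weakly dominated by any point of $K\setminus B(x,\varepsilon)$.
   Context: $\langle f,g\rangle=\sum_\omega f(\omega)g(\omega)$ (with $a\cdot0=0$ for extended reals $a$). $\|z\|_\infty=\max_{\omega}|z(\omega)|$ for $z\in[-\infty,\infty)^\Omega$, and $B(z,r)=\{z':\|z'-z\|_\infty<r\}$. A point $w$ weakly dominates $y$ if $y(\omega)\le w(\omega)$ for all $\omega\in\Omega$. *)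

(* Defs.v *)
From mathcomp Require Import all_boot all_order all_algebra.
From mathcomp Require Import all_classical all_reals ereal.
Set Implicit Arguments. Unset Strict Implicit. Unset Printing Implicit Defensive.
Import Order.TTheory GRing.Theory Num.Theory.
Local Open Scope ring_scope.
Local Open Scope ereal_scope.
Local Open Scope classical_set_scope.

(* <f,g> = sum_w f w * g w in the extended reals; mathcomp's mule has 0 * -oo = 0. *)
Definition edot (R : realType) (Omega : finType) (p : Omega -> R) (y : Omega -> \bar R) : \bar R :=
  \sum_(w : Omega) ((p w)%:E * y w).

Definition supnorm (R : realType) (Omega : finType) (z : Omega -> \bar R) : \bar R :=
  \big[Order.max/0]_(w : Omega) `|z w|.

Definition eball (R : realType) (Omega : finType) (z : Omega -> \bar R) (r : R)
  : set (Omega -> \bar R) :=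
  [set z' | supnorm (fun w => z' w - z w) < r%:E].

Definition Kset (R : realType) (Omega : finType) (p : Omega -> R) (alpha : R)
  : set (Omega -> \bar R) :=
  [set y | (forall w, y w != +oo) /\ edot p y <= alpha%:E].

Definition wdom (R : realType) (Omega : finType) (w y : Omega -> \bar R) : Prop :=
  forall o, y o <= w o.

(* Main.v *)
Require Import Defs.
From mathcomp Require Import all_boot all_order all_algebra.
From mathcomp Require Import all_classical all_reals ereal.
From mathcomp Require Import lra.
Import Order.TTheory GRing.Theory Num.Theory.
Local Open Scope ring_scope.
Local Open Scope classical_set_scope.
Set Implicit Arguments.

Lemma supnorm_ge (R : realType) (Omega : finType) (z : Omega -> \bar R) w :
  (`|z w| <= supnorm z)%E.
Proof. by rewrite /supnorm (bigD1 w) //= le_max lexx. Qed.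

Lemma supnorm_ex (R : realType) (Omega : finType) (z : Omega -> \bar R) (r : R) :
  0 < r -> (r%:E <= supnorm z)%E -> exists w, (r%:E <= `|z w|)%E.
Proof.
move=> r0 H; apply/not_existsP => /= Hn.
have : (supnorm z < r%:E)%E.
  rewrite /supnorm; apply: (big_ind (fun v => v < r%:E)%E).
  - by rewrite lte_fin.
  - by move=> a b ha hb; rewrite gt_max ha hb.
  - by move=> i _; rewrite ltNge; apply/negP; apply: Hn.
by rewrite ltNge H.
Qed.

Lemma pmin_prop (R : realType) (Omega : finType) (p : Omega -> R) :
  (forall w, 0 < p w) ->
  0 < \big[Order.min/1]_(w : Omega) p w /\
  forall w, \big[Order.min/1]_(w : Omega) p w <= p w.
Proof.
move=> hp; split.
  apply: (big_ind (fun v => 0 < v)) => //.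
  by move=> a b ha hb; rewrite lt_min ha hb.
by move=> w; rewrite (bigD1 w) //= ge_min lexx.
Qed.

Theorem lemma6 (R : realType) (Omega : finType) (p : Omega -> R)
  (hp : forall w, 0 < p w /\ p w <= 1) (hsum : \sum_(w : Omega) p w = 1)
  (alpha eps : R) (heps : 0 < eps) (x : Omega -> R)
  (hx : edot p (fun w => (x w)%:E) = alpha%:E) :
  exists delta : R, 0 < delta /\ delta < eps /\
    forall y z : Omega -> \bar R,
      y \in Kset p alpha `&` eball (fun w => (x w)%:E) delta ->
      z \in Kset p alpha `\` eball (fun w => (x w)%:E) eps ->
      ~ wdom z y.
Proof.
have [m0 mle] := @pmin_prop R Omega p (fun w => (hp w).1).
set m := \big[Order.min/1]_(w : Omega) p w in m0 mle.
have [w1 _] : exists w : Omega, True.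
  apply/not_existsP => /= Hn.
  move: hsum; rewrite big_pred0 => [|w]; last by exfalso; apply: (Hn w).
  by move/eqP; rewrite eq_sym oner_eq0.
have m1 : m <= 1 by apply: le_trans (mle w1) (hp w1).2.
exists (m * eps / 2); split; first by rewrite divr_gt0 // mulr_gt0.
split.
  rewrite ltr_pdivrMr // (@le_lt_trans _ _ eps) //.
    by rewrite ler_piMl // ltW.
  by rewrite ltr_pMr // ltr1n.
move=> y z /set_mem [[yfin yK] yB] /set_mem [[zfin zK] zB] dom.
have yr : forall w, y w = (fine (y w))%:E /\ `|fine (y w) - x w| < m * eps / 2.
  move=> w; have := le_lt_trans (@supnorm_ge R Omega (fun w => (y w - (x w)%:E)%E) w) yB.
  by case: (y w) => [r| |] //=; rewrite -EFinB abse_EFin lte_fin.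
have zr : forall w, z w = (fine (z w))%:E.
  move=> w; have := dom w; have := zfin w; rewrite (yr w).1.
  by case: (z w).
have [w0 hw0] : exists w0, (eps%:E <= `|z w0 - (x w0)%:E|)%E.
  apply: (@supnorm_ex R Omega (fun w => (z w - (x w)%:E)%E) eps heps).
  by rewrite leNgt; apply/negP.
move: hw0; rewrite zr -EFinB abse_EFin lee_fin => hw0.
set d := m * eps / 2 in yr.
have dlt : d < m * eps by rewrite /d; have := mulr_gt0 m0 heps; lra.
have dpos : 0 < d by rewrite /d; have := mulr_gt0 m0 heps; lra.
have dle : m * eps <= p w0 * eps by rewrite ler_pM2r // mle.
have p0 : 0 < p w0 := (hp w0).1.
have hyz : forall w, fine (y w) <= fine (z w).
  by move=> w; have := dom w; rewrite (yr w).1 zr lee_fin.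
have hpos : forall w, 0 <= p w * (fine (z w) - x w + d).
  move=> w; rewrite mulr_ge0 //; first exact: ltW (hp w).1.
  have := (yr w).2; rewrite ltr_norml => /andP [h1 _].
  have := hyz w; lra.
have hd0 : eps <= fine (z w0) - x w0.
  move: hw0; rewrite ler_normr => /orP [//|h].
  have := (yr w0).2; rewrite ltr_norml => /andP [h1 _].
  have := hyz w0; have : m * eps <= eps by rewrite ler_piMl // ltW.
  lra.
have key : p w0 * eps <= \sum_w p w * (fine (z w) - x w + d).
  rewrite (bigD1 w0) //=.
  apply: (@le_trans _ _ (p w0 * (fine (z w0) - x w0 + d))).
    rewrite ler_pM2l //; lra.
  rewrite lerDl; apply: sumr_ge0 => w _; exact: hpos.
have e : \sum_w p w * (fine (z w) - x w + d) =
    \sum_w p w * fine (z w) - \sum_w p w * x w + d.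
  rewrite (eq_bigr (fun w => p w * fine (z w) - p w * x w + p w * d)); last first.
    by move=> w _; rewrite mulrDr mulrBr.
  by rewrite !big_split /= sumrN -mulr_suml hsum mul1r.
have ez : edot p z = (\sum_w p w * fine (z w))%:E.
  rewrite /edot -sumEFin; apply: eq_bigr => w _; by rewrite EFinM -zr.
have ex : edot p (fun w => (x w)%:E) = (\sum_w p w * x w)%:E.
  rewrite /edot -sumEFin; apply: eq_bigr => w _; by rewrite EFinM.
move: zK; rewrite ez lee_fin; move: hx; rewrite ex => -[hx].
move: key; rewrite e; lra.
Qed.
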